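(* $MCF(G,\sigma)\subseteq MA(G,\sigma)$, and $$MCF(G,\sigma)=\{\varphi\in MA(G,\sigma)\mid M_\varphi(C^*_r(G,\sigma))\subseteq CF(G,\sigma)\}.$$ Moreover, if $\varphi\in MCF(G,\sigma)$, then for every $x\in C^*_r(G,\sigma)$ the series $\sum_{g\in G}\varphi(g)\widehat x(g)\Lambda_\sigma(g)$ converges to $M_\varphi(x)$ in operator norm.
   Context: $G$ is a discrete group, $\sigma:G\times G\to\mathbb{T}$ a normalized 2-cocycle ($\sigma(g,h)\sigma(gh,k)=\sigma(h,k)\sigma(g,hk)$, $\sigma(g,e)=\sigma(e,g)=1$); $\Lambda_\sigma(g)$ is the unitary on $\ell^2(G)$ with $(\Lambda_\sigma(g)\xi)(h)=\sigma(g,g^{-1}h)\xi(g^{-1}h)$; $C^*_r(G,\sigma)$ is the operator-norm closure of $\mathbb{C}(G,\sigma)=\mathrm{span}\,\Lambda_\sigma(G)$. For $x\in C^*_r(G,\sigma)$, $\widehat x=x\delta_e\in\ell^2(G)$, and its Fourier series is $\sum_g\widehat x(g)\Lambda_\sigma(g)$ (series over $G$ converge as nets of finite partial sums); $CF(G,\sigma)$ is the set of $x\in C^*_r(G,\sigma)$ whose Fourier series converges in operator norm. For $\varphi:G\to\mathbb{C}$, $M_\varphi$ is the linear map on $\mathbb{C}(G,\sigma)$ with $M_\varphi(\Lambda_\sigma(g))=\varphi(g)\Lambda_\sigma(g)$; $MA(G,\sigma)$ is the set of $\varphi$ such that $M_\varphi$ is bounded in operator norm, and then $M_\varphi$ denotes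 its bounded extension to $C^*_r(G,\sigma)$. $MCF(G,\sigma)$ is the set of $\varphi:G\to\mathbb{C}$ such that $\sum_g\varphi(g)\widehat x(g)\Lambda_\sigma(g)$ converges in operator norm for every $x\in C^*_r(G,\sigma)$. *)

(* Defs.v *)
From Stdlib Require Import Reals List ClassicalDescription.
From Coquelicot Require Import Coquelicot.
Open Scope R_scope.

Record Grp := {
  gcar :> Type;
  gmul : gcar -> gcar -> gcar;
  ginv : gcar -> gcar;
  gone : gcar;
  gmulA : forall a b c, gmul a (gmul b c) = gmul (gmul a b) c;
  gmul1l : forall a, gmul gone a = a;
  gmul1r : forall a, gmul a gone = a;
  gmulVl : forall a, gmul (ginv a) a = gone;
  gmulVr : forall a, gmul a (ginv a) = gone
}.

Definition cocycle (G : Grp) (s : G -> G -> C) : Prop :=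
  (forall g h, Cmod (s g h) = 1) /\
  (forall g h k, Cmult (s g h) (s (gmul G g h) k) = Cmult (s h k) (s g (gmul G h k))) /\
  (forall g, s g (gone G) = RtoC 1) /\
  (forall g, s (gone G) g = RtoC 1).

(* vectors are functions G -> C; operators are maps on them; only their
   action on l^2(G) matters *)
Definition vec (G : Grp) := G -> C.
Definition op (G : Grp) := vec G -> vec G.

Definition sumC {A} (l : list A) (f : A -> C) : C :=
  fold_right (fun a acc => Cplus (f a) acc) (RtoC 0) l.
Definition sumR {A} (l : list A) (f : A -> R) : R :=
  fold_right (fun a acc => f a + acc) 0 l.

Definition l2bounded {G : Grp} (xi : vec G) (B : R) : Prop :=
  forall l : list G, NoDup l -> sumR l (fun g => (Cmod (xi g))^2) <= B.

Definition opnorm_le {G : Grp} (T : op G) (c : R) : Prop :=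
  0 <= c /\ forall (xi : vec G) (B : R), l2bounded xi B -> l2bounded (T xi) (c^2 * B).

Definition opsub {G : Grp} (T S : op G) : op G := fun xi h => Cminus (T xi h) (S xi h).

Definition opdist_lt {G : Grp} (T S : op G) (eps : R) : Prop :=
  exists c, c < eps /\ opnorm_le (opsub T S) c.

Definition Lam (G : Grp) (s : G -> G -> C) (g : G) : op G :=
  fun xi h => Cmult (s g (gmul G (ginv G g) h)) (xi (gmul G (ginv G g) h)).

(* element  sum_{(g,c) in a} c Lambda_sigma(g)  of C(G,sigma) *)
Definition lam (G : Grp) (s : G -> G -> C) (a : list (G * C)) : op G :=
  fun xi h => sumC a (fun p => Cmult (snd p) (Lam G s (fst p) xi h)).

Definition psum (G : Grp) (s : G -> G -> C) (F : list G) (f : G -> C) : op G :=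
  fun xi h => sumC F (fun g => Cmult (f g) (Lam G s g xi h)).

(* x in C*_r(G,sigma): operator-norm limit of elements of C(G,sigma) *)
Definition InCr (G : Grp) (s : G -> G -> C) (x : op G) : Prop :=
  forall eps, 0 < eps -> exists a, opdist_lt x (lam G s a) eps.

Definition delta_e (G : Grp) : vec G :=
  fun h => if excluded_middle_informative (h = gone G) then RtoC 1 else RtoC 0.

Definition hat {G : Grp} (x : op G) : vec G := x (delta_e G).

Definition series_conv_to (G : Grp) (s : G -> G -> C) (f : G -> C) (y : op G) : Prop :=
  forall eps, 0 < eps -> exists F0 : list G, forall F : list G,
    NoDup F -> incl F0 F -> opdist_lt (psum G s F f) y eps.

Definition series_conv (G : Grp) (s : G -> G -> C) (f : G -> C) : Prop :=
  exists y : op G, series_conv_to G s f y.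

Definition InCF (G : Grp) (s : G -> G -> C) (x : op G) : Prop :=
  InCr G s x /\ series_conv G s (hat x).

Definition InMA (G : Grp) (s : G -> G -> C) (phi : G -> C) : Prop :=
  exists K : R, forall (a : list (G * C)) (c : R),
    opnorm_le (lam G s a) c ->
    opnorm_le (lam G s (map (fun p => (fst p, Cmult (phi (fst p)) (snd p))) a)) (K * c).

(* y = M_phi(x), the value at x of the (unique) continuous extension of M_phi
   from C(G,sigma) to C*_r(G,sigma) *)
Definition Mval (G : Grp) (s : G -> G -> C) (phi : G -> C) (x y : op G) : Prop :=
  forall eps, 0 < eps -> exists delta, 0 < delta /\ forall a : list (G * C),
    opdist_lt (lam G s a) x delta ->
    opdist_lt (lam G s (map (fun p => (fst p, Cmult (phi (fst p)) (snd p))) a)) y eps.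

Definition InMCF (G : Grp) (s : G -> G -> C) (phi : G -> C) : Prop :=
  forall x : op G, InCr G s x -> series_conv G s (fun g => Cmult (phi g) (hat x g)).

(* Main.v *)
Require Import Defs.
From Stdlib Require Import Reals List Lra ClassicalDescription Classical FunctionalExtensionality.
From Stdlib Require ClassicalEpsilon.
From Coquelicot Require Import Coquelicot.
Open Scope R_scope.

Lemma sumR_app {A} (l1 l2 : list A) f : sumR (l1 ++ l2) f = sumR l1 f + sumR l2 f.
Proof. induction l1; simpl; [lra|rewrite IHl1; lra]. Qed.
Lemma sumC_app {A} (l1 l2 : list A) f : sumC (l1 ++ l2) f = Cplus (sumC l1 f) (sumC l2 f).
Proof. induction l1; simpl. ring. rewrite IHl1; ring. Qed.
Lemma sumR_le {A} (l : list A) f g : (forall x, In x l -> f x <= g x) -> sumR l f <= sumR l g.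
Proof. induction l; simpl; intros H. lra. apply Rplus_le_compat; auto. Qed.
Lemma sumR_nonneg {A} (l : list A) f : (forall x, In x l -> 0 <= f x) -> 0 <= sumR l f.
Proof. induction l; simpl; intros H. lra. apply Rplus_le_le_0_compat; auto. Qed.
Lemma sumR_ext {A} (l : list A) f g : (forall x, In x l -> f x = g x) -> sumR l f = sumR l g.
Proof. induction l; simpl; intros H. lra. rewrite H, IHl; auto. Qed.
Lemma sumC_ext {A} (l : list A) f g : (forall x, In x l -> f x = g x) -> sumC l f = sumC l g.
Proof. induction l; simpl; intros H. auto. rewrite H, IHl; auto. Qed.
Lemma sumR_scal {A} (l : list A) f c : sumR l (fun x => c * f x) = c * sumR l f.
Proof. induction l; simpl. ring. rewrite IHl; ring. Qed.
Lemma sumR_plus {A} (l : list A) f g : sumR l (fun x => f x + g x) = sumR l f + sumR l g.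
Proof. induction l; simpl. ring. rewrite IHl; ring. Qed.
Lemma sumC_scal {A} (l : list A) f c : sumC l (fun x => Cmult c (f x)) = Cmult c (sumC l f).
Proof. induction l; simpl. ring. rewrite IHl; ring. Qed.
Lemma sumC_plus {A} (l : list A) f g : sumC l (fun x => Cplus (f x) (g x)) = Cplus (sumC l f) (sumC l g).
Proof. induction l; simpl. ring. rewrite IHl; ring. Qed.
Lemma sumC_zero {A} (l : list A) : sumC l (fun _ => RtoC 0) = RtoC 0.
Proof. induction l; simpl. auto. rewrite IHl; ring. Qed.
Lemma sumC_swap {A B} (l1 : list A) (l2 : list B) f :
  sumC l1 (fun a => sumC l2 (fun b => f a b)) = sumC l2 (fun b => sumC l1 (fun a => f a b)).
Proof. induction l1; simpl. rewrite sumC_zero; auto. rewrite IHl1, <- sumC_plus. auto. Qed.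
Lemma Cmod_sumC {A} (l : list A) f : Cmod (sumC l f) <= sumR l (fun x => Cmod (f x)).
Proof. induction l; simpl. rewrite Cmod_R, Rabs_R0; lra.
  eapply Rle_trans. apply Cmod_triangle. simpl in *; lra. Qed.
Lemma sumR_map {A B} (l : list A) (h : A -> B) f : sumR (map h l) f = sumR l (fun x => f (h x)).
Proof. induction l; simpl; auto. rewrite IHl; auto. Qed.
Lemma sumC_map {A B} (l : list A) (h : A -> B) f : sumC (map h l) f = sumC l (fun x => f (h x)).
Proof. induction l; simpl; auto. rewrite IHl; auto. Qed.
Lemma sumR_filter {A} (l : list A) p f : (forall x, In x l -> 0 <= f x) -> sumR (filter p l) f <= sumR l f.
Proof. induction l; simpl; intros H. lra.
  assert (IH : sumR (filter p l) f <= sumR l f) by (apply IHl; auto).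
  specialize (H a (or_introl eq_refl)).
  destruct (p a); simpl; lra. Qed.

Lemma sumC_ind {A} (F : list A) (x : A) (f : A -> C) : NoDup F ->
  sumC F (fun g => if excluded_middle_informative (x = g) then f g else RtoC 0) =
  if excluded_middle_informative (In x F) then f x else RtoC 0.
Proof.
  induction F as [|a F IH]; simpl; intros ND.
  - destruct (excluded_middle_informative False); [contradiction|auto].
  - inversion ND; subst. rewrite IH by auto.
    destruct (excluded_middle_informative (x = a)) as [E|E];
    destruct (excluded_middle_informative (In x F)) as [I|I];
    destruct (excluded_middle_informative (a = x \/ In x F)) as [J|J]; subst; try tauto; try ring.
    exfalso; destruct J; [congruence|tauto].
Qed.
Lemma sumR_cons {A} (a : A) l f : sumR (a :: l) f = f a + sumR l f.
Proof. reflexivity. Qed.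
Lemma sumC_cons {A} (a : A) l f : sumC (a :: l) f = Cplus (f a) (sumC l f).
Proof. reflexivity. Qed.
Lemma sumR_nil {A} f : sumR (@nil A) f = 0.
Proof. reflexivity. Qed.
Lemma sumC_nil {A} f : sumC (@nil A) f = RtoC 0.
Proof. reflexivity. Qed.


Definition opadd {G : Grp} (T U : op G) : op G := fun xi h => Cplus (T xi h) (U xi h).
Definition opscal {G : Grp} (z : C) (T : op G) : op G := fun xi h => Cmult z (T xi h).

Lemma op_ext {G : Grp} (T U : op G) : (forall xi h, T xi h = U xi h) -> T = U.
Proof. intros H. apply functional_extensionality; intro xi; apply functional_extensionality; auto. Qed.

Lemma l2_nonneg {G : Grp} (xi : vec G) B : l2bounded xi B -> 0 <= B.
Proof. intros H. apply (H nil (NoDup_nil _)). Qed.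

Lemma N_nonneg {G : Grp} (T : op G) c : opnorm_le T c -> 0 <= c.
Proof. intros [H _]; auto. Qed.

Lemma N_mono {G : Grp} (T : op G) c d : opnorm_le T c -> c <= d -> opnorm_le T d.
Proof. intros [H0 H] Hcd. split. lra. intros xi B HB l Hl.
  eapply Rle_trans. apply (H xi B HB l Hl). pose proof (l2_nonneg _ _ HB).
  apply Rmult_le_compat_r; auto. apply pow_incr; lra. Qed.

Lemma Cmod_ge0 (z : C) : 0 <= Cmod z.
Proof. unfold Cmod. apply sqrt_pos. Qed.

Lemma N_scal {G : Grp} (T : op G) z c : opnorm_le T c -> opnorm_le (opscal z T) (Cmod z * c).
Proof. intros [H0 H]. split. apply Rmult_le_pos; auto; apply Cmod_ge0.
  intros xi B HB l Hl. unfold opscal.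
  rewrite (sumR_ext _ _ (fun g => Cmod z ^ 2 * (Cmod (T xi g))^2)).
  2:{ intros x _. rewrite Cmod_mult. ring. }
  rewrite sumR_scal. specialize (H xi B HB l Hl).
  replace ((Cmod z * c) ^ 2 * B) with (Cmod z ^ 2 * (c^2 * B)) by ring.
  apply Rmult_le_compat_l; auto. apply pow_le, Cmod_ge0. Qed.

Lemma closure_lemma (S c B : R) : 0 <= c -> 0 <= B -> (forall e, 0 < e -> S <= (c + e)^2 * B) -> S <= c^2 * B.
Proof. intros Hc HB H. destruct (Rle_or_lt S (c^2*B)) as [|Hlt]; auto. exfalso.
  set (d := S - c^2*B). assert (Hd : 0 < d) by (unfold d; lra).
  set (e := Rmin 1 (d / ((2*c+1)*B+1))).
  assert (He : 0 < e). { unfold e. apply Rmin_pos. lra. apply Rdiv_lt_0_compat; nra. }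
  assert (He1 : e <= 1) by apply Rmin_l.
  assert (He2 : e <= d / ((2*c+1)*B+1)) by apply Rmin_r.
  assert (e * ((2*c+1)*B+1) <= d). { apply Rmult_le_compat_r with (r:=((2*c+1)*B+1)) in He2; [|nra].
    unfold Rdiv in He2. rewrite Rmult_assoc, Rinv_l in He2 by nra. lra. }
  specialize (H e He). assert ((c+e)^2*B <= c^2*B + e*((2*c+1)*B)) by nra.
  unfold d in *. nra. Qed.

Lemma N_closure {G : Grp} (T : op G) c : 0 <= c -> (forall e, 0 < e -> opnorm_le T (c + e)) -> opnorm_le T c.
Proof. intros Hc H. split; auto. intros xi B HB l Hl. apply closure_lemma; auto.
  eapply l2_nonneg; eauto. intros e He. apply (H e He); auto. Qed.

Lemma sq_ineq (a b x y : R) : 0 < a -> 0 < b -> 0 <= x -> 0 <= y ->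
  (x + y)^2 <= ((a+b)/a) * x^2 + ((a+b)/b) * y^2.
Proof. intros. assert (a*b*(x+y)^2 <= b*(a+b)*x^2 + a*(a+b)*y^2).
  { assert (0 <= (b*x - a*y)^2) by (apply pow2_ge_0).
    assert (b*(a+b)*x^2 + a*(a+b)*y^2 - a*b*(x+y)^2 = (b*x - a*y)^2) by ring. lra. }
  assert (Hab : 0 < a*b) by nra.
  apply Rmult_le_reg_l with (a*b); auto.
  replace (a * b * ((a + b) / a * x ^ 2 + (a + b) / b * y ^ 2)) with (b*(a+b)*x^2 + a*(a+b)*y^2); auto.
  field. lra. Qed.

Lemma N_add_pos {G : Grp} (T U : op G) a b : 0 < a -> 0 < b -> opnorm_le T a -> opnorm_le U b ->
  opnorm_le (opadd T U) (a + b).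
Proof. intros Ha Hb [_ HT] [_ HU]. split. lra. intros xi B HB l Hl. unfold opadd.
  eapply Rle_trans. apply (sumR_le _ _ (fun g => ((a+b)/a) * (Cmod (T xi g))^2 + ((a+b)/b) * (Cmod (U xi g))^2)).
  { intros g _. eapply Rle_trans. apply pow_incr. split. apply Cmod_ge0. apply Cmod_triangle.
    apply sq_ineq; auto; apply Cmod_ge0. }
  rewrite sumR_plus, !sumR_scal. specialize (HT xi B HB l Hl). specialize (HU xi B HB l Hl).
  assert (0 < (a+b)/a) by (apply Rdiv_lt_0_compat; lra).
  assert (0 < (a+b)/b) by (apply Rdiv_lt_0_compat; lra).
  eapply Rle_trans. apply Rplus_le_compat; apply Rmult_le_compat_l; try lra; eauto.
  right. field. lra. Qed.

Lemma N_add {G : Grp} (T U : op G) a b : opnorm_le T a -> opnorm_le U b ->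
  opnorm_le (opadd T U) (a + b).
Proof. intros HT HU. pose proof (N_nonneg _ _ HT). pose proof (N_nonneg _ _ HU).
  apply N_closure. lra. intros e He.
  replace (a + b + e) with ((a + e/2) + (b + e/2)) by field.
  apply N_add_pos; try lra; eapply N_mono; eauto; lra. Qed.

Lemma opsub_eq {G : Grp} (T U : op G) : opsub T U = opadd T (opscal (RtoC (-1)) U).
Proof. apply op_ext; intros; unfold opsub, opadd, opscal. unfold Cminus. 
  apply injective_projections; simpl; ring. Qed.

Lemma Cmod_m1' : Cmod (RtoC (-1)) = 1.
Proof. rewrite Cmod_R; unfold Rabs; destruct Rcase_abs; lra. Qed.

Lemma N_sub {G : Grp} (T U : op G) a b : opnorm_le T a -> opnorm_le U b ->
  opnorm_le (opsub T U) (a + b).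
Proof. intros HT HU. rewrite opsub_eq. apply N_add; auto.
  replace b with (Cmod (RtoC (-1)) * b) by (rewrite Cmod_m1'; ring). apply N_scal; auto. Qed.

Lemma N_zero {G : Grp} : opnorm_le (fun (_ : vec G) (_ : G) => RtoC 0) 0.
Proof. split. lra. intros xi B HB l Hl. rewrite (sumR_ext _ _ (fun _ => 0)).
  replace (0^2*B) with 0 by ring. clear. induction l; simpl; lra. intros; rewrite Cmod_R, Rabs_R0; ring. Qed.

Lemma N_tri {G : Grp} (T U V : op G) a b : opnorm_le (opsub T U) a -> opnorm_le (opsub U V) b ->
  opnorm_le (opsub T V) (a + b).
Proof. intros H1 H2. replace (opsub T V) with (opadd (opsub T U) (opsub U V)). apply N_add; auto.
  apply op_ext; intros; unfold opadd, opsub; ring. Qed.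

Lemma N_symm {G : Grp} (T U : op G) a : opnorm_le (opsub T U) a -> opnorm_le (opsub U T) a.
Proof. intros H. replace (opsub U T) with (opscal (RtoC (-1)) (opsub T U)).
  replace a with (Cmod (RtoC (-1)) * a) by (rewrite Cmod_m1'; ring). apply N_scal; auto.
  apply op_ext; intros; unfold opscal, opsub. apply injective_projections; simpl; ring. Qed.


Lemma NoDup_map_inj {A B} (f : A -> B) (l : list A) : (forall x y, f x = f y -> x = y) -> NoDup l -> NoDup (map f l).
Proof. intros Hf ND; induction ND; simpl; constructor; auto.
  intros Hin. apply in_map_iff in Hin. destruct Hin as [y [Hy Hiny]]. apply Hf in Hy; subst; auto. Qed.

Lemma ginv_cancel (G : Grp) (g h : G) : gmul G g (gmul G (ginv G g) h) = h.
Proof. rewrite gmulA, gmulVr, gmul1l; auto. Qed.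

Lemma ginv_eq_one (G : Grp) (k g : G) : gmul G (ginv G k) g = gone G <-> k = g.
Proof. split; intros H.
  - rewrite <- (ginv_cancel G k g), H, gmul1r; auto.
  - subst. apply gmulVl. Qed.

Lemma N_Lam (G : Grp) s g : cocycle G s -> opnorm_le (Lam G s g) 1.
Proof. intros [Hm _]. split. lra. intros xi B HB l Hl. unfold Lam.
  rewrite (sumR_ext _ _ (fun h => (Cmod (xi (gmul G (ginv G g) h)))^2)).
  2:{ intros x _. rewrite Cmod_mult, Hm. ring. }
  rewrite <- (sumR_map l (gmul G (ginv G g)) (fun k => Cmod (xi k) ^ 2)).
  replace (1^2*B) with B by ring. apply HB. apply NoDup_map_inj; auto.
  intros x y E. rewrite <- (ginv_cancel G g x), E, ginv_cancel; auto. Qed.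

Lemma N_psum (G : Grp) s F f : cocycle G s -> opnorm_le (psum G s F f) (sumR F (fun g => Cmod (f g))).
Proof. intros Hs. induction F as [|a F IH]; simpl.
  - replace (psum G s nil f) with (fun (_ : vec G) (_ : G) => RtoC 0) by (apply op_ext; auto). apply N_zero.
  - replace (psum G s (a :: F) f) with (opadd (opscal (f a) (Lam G s a)) (psum G s F f)).
    + apply N_add; auto. replace (Cmod (f a)) with (Cmod (f a) * 1) by ring. apply N_scal, N_Lam; auto.
    + apply op_ext; intros; unfold psum, opadd, opscal; simpl; auto. Qed.

Lemma N_lam (G : Grp) s a : cocycle G s -> opnorm_le (lam G s a) (sumR a (fun p => Cmod (snd p))).
Proof. intros Hs. induction a as [|p a IH]; simpl.
  - replace (lam G s nil) with (fun (_ : vec G) (_ : G) => RtoC 0) by (apply op_ext; auto). apply N_zero.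
  - replace (lam G s (p :: a)) with (opadd (opscal (snd p) (Lam G s (fst p))) (lam G s a)).
    + apply N_add; auto. replace (Cmod (snd p)) with (Cmod (snd p) * 1) by ring. apply N_scal, N_Lam; auto.
    + apply op_ext; intros; unfold lam, opadd, opscal; simpl; auto. Qed.

Lemma delta_1 (G : Grp) : delta_e G (gone G) = RtoC 1.
Proof. unfold delta_e. destruct (excluded_middle_informative _); tauto. Qed.
Lemma delta_0 (G : Grp) g : g <> gone G -> delta_e G g = RtoC 0.
Proof. intros. unfold delta_e. destruct (excluded_middle_informative _); tauto. Qed.

Lemma delta_l2 (G : Grp) : l2bounded (delta_e G) 1.
Proof. intros l Hl. assert (H : forall l, NoDup l -> ~ In (gone G) l -> sumR l (fun g => Cmod (delta_e G g) ^ 2) = 0).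
  { clear. intros l Hl Hn. induction l. auto. rewrite sumR_cons.
    rewrite delta_0. rewrite IHl. rewrite Cmod_R, Rabs_R0. ring. inversion Hl; auto. simpl in Hn; tauto.
    intro; subst; simpl in Hn; tauto. }
  induction l. simpl; lra. rewrite sumR_cons. inversion Hl; subst.
  destruct (classic (a = gone G)).
  - subst. rewrite H; auto. rewrite delta_1, Cmod_R, Rabs_R1. lra.
  - rewrite delta_0, Cmod_R, Rabs_R0 by auto. specialize (IHl H3). lra. Qed.

Lemma hat_bound (G : Grp) (T : op G) c g : opnorm_le T c -> Cmod (hat T g) <= c.
Proof. intros [Hc H]. specialize (H _ _ (delta_l2 G) (g :: nil)).
  assert (HN : NoDup (g :: nil)) by (constructor; [simpl; tauto|constructor]).
  specialize (H HN). rewrite sumR_cons in H. unfold hat.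
  pose proof (Cmod_ge0 (T (delta_e G) g)). rewrite sumR_nil in H. nra. Qed.


Definition indc {A} (x y : A) (c : C) : C := if excluded_middle_informative (x = y) then c else RtoC 0.

Lemma ind_sym {A} (x y : A) c : indc x y c = indc y x c.
Proof. unfold indc. destruct (excluded_middle_informative (x = y)), (excluded_middle_informative (y = x)); subst; tauto. Qed.

Lemma sumC_ind' {A} (F : list A) (x : A) (f : A -> C) : NoDup F ->
  sumC F (fun g => indc x g (f g)) = if excluded_middle_informative (In x F) then f x else RtoC 0.
Proof. apply sumC_ind. Qed.

Lemma hat_Lam (G : Grp) s k g : cocycle G s -> hat (Lam G s k) g = indc g k (RtoC 1).
Proof. intros [_ [_ [H1 _]]]. unfold hat, Lam, indc. destruct (excluded_middle_informative (g = k)).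
  - subst. rewrite gmulVl, H1, delta_1. ring.
  - rewrite delta_0. ring. rewrite ginv_eq_one. auto. Qed.

Lemma hat_psum (G : Grp) s F f g : cocycle G s -> NoDup F ->
  hat (psum G s F f) g = if excluded_middle_informative (In g F) then f g else RtoC 0.
Proof. intros Hs HF. unfold hat, psum. rewrite <- sumC_ind' by auto. apply sumC_ext. intros k _.
  fold (hat (Lam G s k) g). rewrite hat_Lam by auto. unfold indc. destruct (excluded_middle_informative _); ring. Qed.

Definition coef {G : Grp} (a : list (G * C)) (g : G) : C := sumC a (fun p => indc g (fst p) (snd p)).

Lemma hat_lam (G : Grp) s a g : cocycle G s -> hat (lam G s a) g = coef a g.
Proof. intros Hs. unfold hat, lam, coef. apply sumC_ext. intros p _.
  fold (hat (Lam G s (fst p)) g). rewrite hat_Lam by auto. unfold indc. destruct (excluded_middle_informative _); ring. Qed.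

Lemma coef_app {G : Grp} (a b : list (G * C)) g : coef (a ++ b) g = Cplus (coef a g) (coef b g).
Proof. unfold coef. apply sumC_app. Qed.

Definition scl {G : Grp} (r : C) (p : G * C) : G * C := (fst p, Cmult r (snd p)).

Lemma coef_scl {G : Grp} (a : list (G * C)) r g : coef (map (scl r) a) g = Cmult r (coef a g).
Proof. unfold coef. rewrite sumC_map, <- sumC_scal. apply sumC_ext. intros p _. unfold scl, indc; simpl.
  destruct (excluded_middle_informative _); ring. Qed.

Lemma lam_app (G : Grp) s a b : lam G s (a ++ b) = opadd (lam G s a) (lam G s b).
Proof. apply op_ext; intros. unfold lam, opadd. apply sumC_app. Qed.

Lemma lam_scl (G : Grp) s a r : lam G s (map (scl r) a) = opscal r (lam G s a).
Proof. apply op_ext; intros. unfold lam, opscal. rewrite sumC_map, <- sumC_scal. apply sumC_ext.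
  intros; unfold scl; simpl; ring. Qed.

Definition Sop (G : Grp) s (phi : G -> C) (F : list G) (w : op G) : op G :=
  psum G s F (fun g => Cmult (phi g) (hat w g)).

Definition pmap {G : Grp} (phi : G -> C) (p : G * C) : G * C := (fst p, Cmult (phi (fst p)) (snd p)).

Definition inF {G : Grp} (F : list G) (p : G * C) : bool :=
  if excluded_middle_informative (In (fst p) F) then true else false.

Lemma sumC_filter {A} (l : list A) P f : sumC (filter P l) f = sumC l (fun x => if P x then f x else RtoC 0).
Proof. induction l; simpl; auto. destruct (P a); simpl; rewrite IHl; auto. ring. Qed.

Lemma S_lam (G : Grp) s phi F b : cocycle G s -> NoDup F ->
  Sop G s phi F (lam G s b) = lam G s (map (pmap phi) (filter (inF F) b)).
Proof. intros Hs HF. apply op_ext; intros xi h.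
  assert (Hc : forall g, hat (lam G s b) g = coef b g) by (intros; apply hat_lam; auto).
  unfold Sop, psum. unfold lam at 2.
  rewrite sumC_map, sumC_filter.
  rewrite (sumC_ext F _ (fun g => sumC b (fun p => indc (fst p) g (Cmult (Cmult (phi g) (snd p)) (Lam G s g xi h))))).
  2:{ intros g _. rewrite Hc. unfold coef. rewrite <- sumC_scal.
      rewrite <- (Cmult_comm (Lam G s g xi h)), <- sumC_scal. apply sumC_ext. intros p _.
      rewrite (ind_sym g). unfold indc. destruct (excluded_middle_informative _); ring. }
  rewrite sumC_swap. apply sumC_ext. intros p _.
  rewrite (sumC_ind' F (fst p) (fun g => Cmult (Cmult (phi g) (snd p)) (Lam G s g xi h)) HF).
  unfold inF, pmap; simpl. destruct (excluded_middle_informative _); auto. Qed.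


Lemma Cmod_sq (z : C) : Cmod z ^ 2 = fst z * fst z + snd z * snd z.
Proof. unfold Cmod. rewrite pow2_sqrt. ring. pose proof (pow2_ge_0 (fst z)); pose proof (pow2_ge_0 (snd z)); lra. Qed.

Lemma fst_le (z : C) : Rabs (fst z) <= Cmod z.
Proof. eapply Rle_trans; [|apply Rmax_Cmod]. apply Rmax_l. Qed.
Lemma snd_le (z : C) : Rabs (snd z) <= Cmod z.
Proof. eapply Rle_trans; [|apply Rmax_Cmod]. apply Rmax_r. Qed.

Lemma pt_bound {G : Grp} (T : op G) c xi B h : opnorm_le T c -> l2bounded xi B -> Cmod (T xi h) <= c * sqrt B.
Proof. intros [Hc H] HB. pose proof (l2_nonneg _ _ HB).
  assert (HN : NoDup (h :: nil)) by (constructor; [simpl; tauto|constructor]).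
  specialize (H _ _ HB _ HN). rewrite sumR_cons, sumR_nil in H.
  pose proof (Cmod_ge0 (T xi h)). pose proof (sqrt_pos B). pose proof (sqrt_sqrt B H0) as Hsq.
  assert (Cmod (T xi h) ^2 <= (c * sqrt B)^2). { replace ((c*sqrt B)^2) with (c^2 * (sqrt B * sqrt B)) by ring. rewrite Hsq. lra. }
  assert (0 <= c * sqrt B) by (apply Rmult_le_pos; auto).
  destruct (Rle_or_lt (Cmod (T xi h)) (c * sqrt B)) as [|Hlt]; auto.
  assert ((c * sqrt B)^2 < Cmod (T xi h)^2). { simpl. rewrite !Rmult_1_r. apply Rmult_le_0_lt_compat; lra. }
  lra. Qed.

Lemma lim_sumR {A} (l : list A) (u : nat -> A -> R) (v : A -> R) :
  (forall x, is_lim_seq (fun m => u m x) (v x)) -> is_lim_seq (fun m => sumR l (u m)) (sumR l v).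
Proof. intros H. induction l. 
  - apply is_lim_seq_const.
  - apply (is_lim_seq_plus' (fun m => u m a) (fun m => sumR l (u m))); auto. Qed.

Lemma Lim_seq_real (u : nat -> R) : ex_finite_lim_seq u -> is_lim_seq u (real (Lim_seq u)).
Proof. intros [l Hl]. rewrite (is_lim_seq_unique _ _ Hl). simpl. auto. Qed.

Lemma complete (G : Grp) (T : nat -> op G) (e : nat -> R) :
  (forall n m, (n <= m)%nat -> opnorm_le (opsub (T m) (T n)) (e n)) ->
  (forall eps, 0 < eps -> exists N, e N < eps) ->
  exists y, forall n, opnorm_le (opsub y (T n)) (e n).
Proof.
  intros HC He.
  set (y := fun (xi : vec G) (h : G) =>
        (real (Lim_seq (fun m => fst (T m xi h))), real (Lim_seq (fun m => snd (T m xi h)))) : C).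
  exists y. intros n. split. apply (N_nonneg _ _ (HC n n (le_n n))).
  intros xi B HB l Hl. pose proof (l2_nonneg _ _ HB) as HB0.
  assert (Hcau : forall h, forall eps, 0 < eps -> exists N, forall m k, (N <= m)%nat -> (N <= k)%nat ->
            Cmod (Cminus (T m xi h) (T k xi h)) < eps).
  { intros h eps Heps. destruct (He (eps / (2 * (sqrt B + 1)))) as [N HN].
    { apply Rdiv_lt_0_compat; auto. pose proof (sqrt_pos B); lra. }
    exists N. intros m k Hm Hk.
    pose proof (pt_bound _ _ _ _ h (HC N m Hm) HB) as H1.
    pose proof (pt_bound _ _ _ _ h (HC N k Hk) HB) as H2. unfold opsub in *.
    replace (Cminus (T m xi h) (T k xi h)) with (Cplus (Cminus (T m xi h) (T N xi h)) (Cmult (RtoC (-1)) (Cminus (T k xi h) (T N xi h)))) by ring.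
    eapply Rle_lt_trans. apply Cmod_triangle. rewrite Cmod_mult, Cmod_m1'.
    pose proof (sqrt_pos B). pose proof (N_nonneg _ _ (HC N N (le_n N))).
    assert (e N * (2 * (sqrt B + 1)) < eps).
    { apply Rmult_lt_compat_r with (r := 2 * (sqrt B + 1)) in HN; [|lra].
      unfold Rdiv in HN. rewrite Rmult_assoc, Rinv_l in HN; lra. }
    nra. }
  assert (Hlim : forall h, is_lim_seq (fun m => fst (T m xi h)) (fst (y xi h)) /\
                           is_lim_seq (fun m => snd (T m xi h)) (snd (y xi h))).
  { intros h. split; apply Lim_seq_real; apply ex_lim_seq_cauchy_corr; intros [eps Heps];
    destruct (Hcau h eps Heps) as [N HN]; exists N; intros m k Hm Hk; simpl.
    - apply Rle_lt_trans with (Cmod (Cminus (T m xi h) (T k xi h))); [|apply (HN m k Hm Hk)].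
      replace (fst (T m xi h) - fst (T k xi h)) with (fst (Cminus (T m xi h) (T k xi h))) by (simpl; ring). apply fst_le.
    - apply Rle_lt_trans with (Cmod (Cminus (T m xi h) (T k xi h))); [|apply (HN m k Hm Hk)].
      replace (snd (T m xi h) - snd (T k xi h)) with (snd (Cminus (T m xi h) (T k xi h))) by (simpl; ring). apply snd_le. }
  assert (HL : is_lim_seq (fun m => sumR l (fun h => Cmod (opsub (T m) (T n) xi h) ^ 2))
                          (sumR l (fun h => Cmod (opsub y (T n) xi h) ^ 2))).
  { apply (lim_sumR l (fun m h => Cmod (opsub (T m) (T n) xi h) ^ 2)). intros h.
    destruct (Hlim h) as [Hf Hs]. unfold opsub. rewrite Cmod_sq.
    apply is_lim_seq_ext with (fun m => (fst (T m xi h) - fst (T n xi h)) * (fst (T m xi h) - fst (T n xi h))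
                                        + (snd (T m xi h) - snd (T n xi h)) * (snd (T m xi h) - snd (T n xi h))).
    { intros m. rewrite Cmod_sq. simpl. ring. }
    replace (fst (Cminus (y xi h) (T n xi h)) * fst (Cminus (y xi h) (T n xi h)) +
       snd (Cminus (y xi h) (T n xi h)) * snd (Cminus (y xi h) (T n xi h))) with
      ((fst (y xi h) - fst (T n xi h)) * (fst (y xi h) - fst (T n xi h)) +
       (snd (y xi h) - snd (T n xi h)) * (snd (y xi h) - snd (T n xi h))) by (simpl; ring).
    apply is_lim_seq_plus'; apply is_lim_seq_mult'; apply is_lim_seq_minus'; auto; apply is_lim_seq_const. }
  assert (Hle : Rbar_le (sumR l (fun h => Cmod (opsub y (T n) xi h) ^ 2)) (e n ^ 2 * B)).
  { eapply is_lim_seq_le_loc; [|apply HL|apply is_lim_seq_const].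
    exists n. intros m Hm. apply (HC n m Hm); auto. }
  simpl in Hle. auto. Qed.


Lemma archi (A : R) : exists n : nat, A < INR n.
Proof. destruct (INR_archimed 1 A) as [n Hn]; [lra|]. exists n. lra. Qed.

Lemma psum_app (G : Grp) s F1 F2 f : psum G s (F1 ++ F2) f = opadd (psum G s F1 f) (psum G s F2 f).
Proof. apply op_ext; intros; unfold psum, opadd. apply sumC_app. Qed.

Lemma psum_coef_add (G : Grp) s F f1 f2 : psum G s F (fun g => Cplus (f1 g) (f2 g)) = opadd (psum G s F f1) (psum G s F f2).
Proof. apply op_ext; intros; unfold psum, opadd. rewrite <- sumC_plus. apply sumC_ext; intros; ring. Qed.

Lemma psum_coef_sub (G : Grp) s F f1 f2 : psum G s F (fun g => Cminus (f1 g) (f2 g)) = opsub (psum G s F f1) (psum G s F f2).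
Proof. apply op_ext; intros; unfold psum, opsub.
  replace (Cminus (sumC F (fun g => Cmult (f1 g) (Lam G s g xi h))) (sumC F (fun g => Cmult (f2 g) (Lam G s g xi h))))
    with (Cplus (sumC F (fun g => Cmult (f1 g) (Lam G s g xi h))) (Cmult (RtoC (-1)) (sumC F (fun g => Cmult (f2 g) (Lam G s g xi h))))).
  2:{ apply injective_projections; simpl; ring. }
  rewrite <- sumC_scal, <- sumC_plus.
  apply sumC_ext; intros. apply injective_projections; simpl; ring. Qed.

Lemma psum_coef_scal (G : Grp) s F f r : psum G s F (fun g => Cmult r (f g)) = opscal r (psum G s F f).
Proof. apply op_ext; intros; unfold psum, opscal. rewrite <- sumC_scal. apply sumC_ext; intros; ring. Qed.

Lemma Sop_add (G : Grp) s phi F w v : Sop G s phi F (opadd w v) = opadd (Sop G s phi F w) (Sop G s phi F v).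
Proof. unfold Sop. rewrite <- psum_coef_add. f_equal. apply functional_extensionality; intro g.
  unfold hat, opadd. ring. Qed.

Lemma Sop_sub (G : Grp) s phi F w v : Sop G s phi F (opsub w v) = opsub (Sop G s phi F w) (Sop G s phi F v).
Proof. unfold Sop. rewrite <- psum_coef_sub. f_equal. apply functional_extensionality; intro g.
  unfold hat, opsub. ring. Qed.

Lemma Sop_scal (G : Grp) s phi F w r : Sop G s phi F (opscal r w) = opscal r (Sop G s phi F w).
Proof. unfold Sop. rewrite <- psum_coef_scal. f_equal. apply functional_extensionality; intro g.
  unfold hat, opscal. ring. Qed.

Definition CFs {G : Grp} (phi : G -> C) (F : list G) := sumR F (fun g => Cmod (phi g)).
Definition Db {G : Grp} (phi : G -> C) (b : list (G * C)) := sumR b (fun p => Cmod (phi (fst p)) * Cmod (snd p)).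

Lemma CFs_nonneg {G : Grp} (phi : G -> C) F : 0 <= CFs phi F.
Proof. apply sumR_nonneg; intros; apply Cmod_ge0. Qed.

Lemma S_gen_bound (G : Grp) s phi F w c : cocycle G s -> opnorm_le w c -> opnorm_le (Sop G s phi F w) (CFs phi F * c).
Proof. intros Hs Hw. eapply N_mono. apply N_psum; auto. unfold CFs.
  rewrite (Rmult_comm _ c), <- sumR_scal. apply sumR_le; intros g _. rewrite Cmod_mult.
  rewrite (Rmult_comm c). apply Rmult_le_compat_l. apply Cmod_ge0. apply hat_bound; auto. Qed.

Lemma S_lam_bound (G : Grp) s phi F b : cocycle G s -> NoDup F -> opnorm_le (Sop G s phi F (lam G s b)) (Db phi b).
Proof. intros Hs HF. rewrite S_lam by auto. eapply N_mono. apply N_lam; auto.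
  rewrite sumR_map. unfold Db. eapply Rle_trans; [|apply sumR_filter with (p := inF F)].
  right. apply sumR_ext; intros p _. unfold pmap; simpl. apply Cmod_mult.
  intros; apply Rmult_le_pos; apply Cmod_ge0. Qed.

Definition deq {A} (x y : A) : {x = y} + {x <> y} := excluded_middle_informative (x = y).

Lemma NoDup_filter {A} (p : A -> bool) l : NoDup l -> NoDup (filter p l).
Proof. induction 1; simpl. constructor. destruct (p x); auto. constructor; auto.
  intro Hin. apply filter_In in Hin. tauto. Qed.

Lemma PB (G : Grp) s phi x c : cocycle G s -> series_conv G s (fun g => Cmult (phi g) (hat x g)) ->
  opnorm_le x c -> exists M, forall F, NoDup F -> opnorm_le (Sop G s phi F x) M.
Proof. intros Hs [y Hy] Hx. destruct (Hy 1) as [F0 HF0]; [lra|].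
  set (F0d := nodup deq F0).
  assert (ND0 : NoDup F0d) by apply NoDup_nodup.
  assert (I0 : incl F0 F0d) by (intros g Hg; apply nodup_In; auto).
  exists (2 + 2 * CFs phi F0d * c). intros F HF.
  set (Ff := filter (fun g => if excluded_middle_informative (In g F) then false else true) F0d).
  assert (NDf : NoDup (F ++ Ff)).
  { apply NoDup_app; auto. apply NoDup_filter; auto. intros g Hg Hg'. unfold Ff in Hg'.
    rewrite filter_In in Hg'. destruct Hg' as [_ Hb]. destruct (excluded_middle_informative (In g F)); [discriminate|tauto]. }
  assert (If : incl F0 (F ++ Ff)).
  { intros g Hg. apply in_or_app. destruct (classic (In g F)); auto. right. unfold Ff. rewrite filter_In.
    split; auto. destruct (excluded_middle_informative (In g F)); tauto. }
  destruct (HF0 _ NDf If) as [c1 [Hc1 N1]]. destruct (HF0 _ ND0 I0) as [c2 [Hc2 N2]].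
  assert (Eq : Sop G s phi F x = opsub (opadd (opsub (opsub (Sop G s phi (F ++ Ff) x) y) (opsub (Sop G s phi F0d x) y)) (Sop G s phi F0d x)) (Sop G s phi Ff x)).
  { unfold Sop at 2. rewrite psum_app. fold (Sop G s phi F x). fold (Sop G s phi Ff x).
    apply op_ext; intros; unfold opsub, opadd. ring. }
  rewrite Eq. pose proof (N_nonneg _ _ Hx).
  assert (CFs phi Ff <= CFs phi F0d) by (apply sumR_filter; intros; apply Cmod_ge0).
  eapply N_mono. apply N_sub. apply N_add. apply N_sub. apply N1. apply N2.
  apply S_gen_bound; eauto. apply S_gen_bound; eauto.
  pose proof (CFs_nonneg phi Ff). nra. Qed.


Fixpoint st {G : Grp} (phi : G -> C) (pick : R -> list G * list (G * C)) (n : nat) : list (G * C) * R * list G :=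
  match n with
  | O => (nil, 1, nil)
  | S k => let '(b, t, F) := st phi pick k in
           let t' := Rmin (t / 2) (/ (2 * (CFs phi F + 1))) in
           let p := pick ((INR (S k) + Db phi b + 1) / t') in
           (b ++ map (scl (RtoC t')) (snd p), t', fst p)
  end.

Definition bb {G : Grp} (phi : G -> C) (pick : R -> list G * list (G * C)) n : list (G * C) := fst (fst (@st G phi pick n)).
Definition tt {G : Grp} (phi : G -> C) (pick : R -> list G * list (G * C)) n : R := snd (fst (@st G phi pick n)).
Definition FF {G : Grp} (phi : G -> C) (pick : R -> list G * list (G * C)) n : list G := snd (@st G phi pick n).
Definition KK {G : Grp} (phi : G -> C) (pick : R -> list G * list (G * C)) k : R := (INR (S k) + Db phi (bb phi pick k) + 1) / tt phi pick (S k).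

Lemma tt_S {G : Grp} (phi : G -> C) (pick : R -> list G * list (G * C)) k : @tt G phi pick (S k) = Rmin (tt phi pick k / 2) (/ (2 * (CFs phi (FF phi pick k) + 1))).
Proof. unfold tt, FF; simpl. destruct (st phi pick k) as [[b t] F]; reflexivity. Qed.
Lemma bb_S {G : Grp} (phi : G -> C) (pick : R -> list G * list (G * C)) k : @bb G phi pick (S k) = bb phi pick k ++ map (scl (RtoC (tt phi pick (S k)))) (snd (pick (KK phi pick k))).
Proof. unfold KK. rewrite tt_S. unfold tt, FF, bb; simpl. destruct (st phi pick k) as [[b t] F]; reflexivity. Qed.
Lemma FF_S {G : Grp} (phi : G -> C) (pick : R -> list G * list (G * C)) k : @FF G phi pick (S k) = fst (pick (KK phi pick k)).
Proof. unfold KK. rewrite tt_S. unfold tt, FF, bb; simpl. destruct (st phi pick k) as [[b t] F]; reflexivity. Qed.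
Lemma tt_0 {G : Grp} (phi : G -> C) (pick : R -> list G * list (G * C)) : @tt G phi pick 0 = 1.
Proof. reflexivity. Qed.
Lemma bb_0 {G : Grp} (phi : G -> C) (pick : R -> list G * list (G * C)) : @bb G phi pick 0 = nil.
Proof. reflexivity. Qed.

Lemma tt_pos {G : Grp} (phi : G -> C) (pick : R -> list G * list (G * C)) n : 0 < @tt G phi pick n.
Proof. induction n. rewrite tt_0; lra. rewrite tt_S. apply Rmin_pos. lra.
  apply Rinv_0_lt_compat. pose proof (CFs_nonneg phi (FF phi pick n)). lra. Qed.

Lemma tt_half {G : Grp} (phi : G -> C) (pick : R -> list G * list (G * C)) n : @tt G phi pick (S n) <= tt phi pick n / 2.
Proof. rewrite tt_S. apply Rmin_l. Qed.

Lemma tt_C {G : Grp} (phi : G -> C) (pick : R -> list G * list (G * C)) n : CFs phi (FF phi pick n) * (2 * @tt G phi pick (S n)) <= 1.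
Proof. rewrite tt_S. pose proof (Rmin_r (tt phi pick n / 2) (/ (2 * (CFs phi (FF phi pick n) + 1)))).
  set (m := Rmin _ _) in *. pose proof (CFs_nonneg phi (FF phi pick n)).
  set (c := CFs phi (FF phi pick n)) in *.
  assert (0 < m) by (unfold m; apply Rmin_pos; [pose proof (tt_pos phi pick n); lra| apply Rinv_0_lt_compat; lra]).
  assert (m * (2 * (c + 1)) <= 1).
  { apply Rmult_le_compat_r with (r := 2*(c+1)) in H; [|lra]. rewrite Rinv_l in H; lra. }
  nra. Qed.

Lemma tt_dec {G : Grp} (phi : G -> C) (pick : R -> list G * list (G * C)) n : @tt G phi pick n * (INR n + 1) <= 1.
Proof. induction n. rewrite tt_0; simpl; lra. rewrite S_INR. pose proof (tt_half phi pick n).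
  pose proof (tt_pos phi pick (S n)). pose proof (pos_INR n). nra. Qed.


Definition pickP (G : Grp) s (phi : G -> C) (pick : R -> list G * list (G * C)) :=
  forall K, NoDup (fst (pick K)) /\ opnorm_le (lam G s (snd (pick K))) 1 /\
            ~ opnorm_le (Sop G s phi (fst (pick K)) (lam G s (snd (pick K)))) K.

Lemma opsub_self {G : Grp} (T : op G) : opsub T T = fun _ _ => RtoC 0.
Proof. apply op_ext; intros; unfold opsub; ring. Qed.

Lemma Cmod_pos (r : R) : 0 <= r -> Cmod (RtoC r) = r.
Proof. intros. rewrite Cmod_R, Rabs_pos_eq; auto. Qed.

Lemma bb_cauchy (G : Grp) s phi pick : cocycle G s -> pickP G s phi pick -> forall n m, (n <= m)%nat ->
  opnorm_le (opsub (lam G s (bb phi pick m)) (lam G s (bb phi pick n))) (2 * tt phi pick (S n) - 2 * tt phi pick (S m)).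
Proof. intros Hs HP n m Hnm. induction Hnm.
  - rewrite opsub_self. eapply N_mono. apply N_zero. lra.
  - rewrite bb_S, lam_app, lam_scl.
    replace (opsub (opadd (lam G s (bb phi pick m)) (opscal (RtoC (tt phi pick (S m))) (lam G s (snd (pick (KK phi pick m)))))) (lam G s (bb phi pick n)))
      with (opadd (opsub (lam G s (bb phi pick m)) (lam G s (bb phi pick n))) (opscal (RtoC (tt phi pick (S m))) (lam G s (snd (pick (KK phi pick m)))))).
    2:{ apply op_ext; intros; unfold opadd, opsub, opscal; ring. }
    eapply N_mono. apply N_add. apply IHHnm. apply N_scal. apply (HP (KK phi pick m)).
    rewrite Cmod_pos by (left; apply tt_pos). pose proof (tt_half phi pick (S m)). lra. Qed.

Lemma UB0 (G : Grp) s phi : cocycle G s -> InMCF G s phi ->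
  exists K, 0 <= K /\ forall F a c, NoDup F -> opnorm_le (lam G s a) c -> opnorm_le (Sop G s phi F (lam G s a)) (K * c).
Proof.
  intros Hs HM. apply NNPP. intros Hno.
  assert (Hneg : forall K, exists p : list G * list (G * C), NoDup (fst p) /\ opnorm_le (lam G s (snd p)) 1 /\
            ~ opnorm_le (Sop G s phi (fst p) (lam G s (snd p))) K).
  { intros K. set (K' := Rmax K 0). apply NNPP; intros Hnp. apply Hno. exists K'. split. apply Rmax_r.
    intros F a c HF Ha. apply NNPP; intros Hb.
    pose proof (N_nonneg _ _ Ha) as Hc.
    destruct (Req_dec c 0) as [E|Hc'].
    { subst. apply Hb. rewrite Rmult_0_r. replace 0 with (CFs phi F * 0) by ring. apply S_gen_bound; auto. }
    apply Hnp. exists (F, map (scl (RtoC (/ c))) a). simpl. split; auto. split.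
    - rewrite lam_scl. replace 1 with (Cmod (RtoC (/c)) * c). apply N_scal; auto.
      rewrite Cmod_pos. field; auto. left; apply Rinv_0_lt_compat; lra.
    - intros HK. apply Hb. rewrite lam_scl, Sop_scal in HK.
      replace (Sop G s phi F (lam G s a)) with (opscal (RtoC c) (opscal (RtoC (/ c)) (Sop G s phi F (lam G s a)))).
      2:{ apply op_ext; intros; unfold opscal. rewrite Cmult_assoc, <- RtoC_mult, Rinv_r by auto. ring. }
      eapply N_mono. apply N_scal, HK. rewrite Cmod_pos by lra. rewrite Rmult_comm.
      apply Rmult_le_compat_r; [lra|apply Rmax_l]. }
  set (pick := fun K => proj1_sig (ClassicalEpsilon.constructive_indefinite_description _ (Hneg K))).
  assert (HP : pickP G s phi pick).
  { intros K. unfold pick. apply (proj2_sig (ClassicalEpsilon.constructive_indefinite_description _ (Hneg K))). }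
  clearbody pick.
  destruct (complete G (fun n => lam G s (bb phi pick n)) (fun n => 2 * tt phi pick (S n))) as [x Hx].
  { intros n m Hnm. eapply N_mono. apply (bb_cauchy G s phi pick Hs HP n m Hnm). pose proof (tt_pos phi pick (S m)); lra. }
  { intros eps Heps. destruct (archi (2 / eps)) as [N HN]. exists N.
    pose proof (tt_dec phi pick (S N)). rewrite S_INR in H. pose proof (tt_pos phi pick (S N)).
    pose proof (pos_INR N).
    assert (2 < INR N * eps). { apply Rmult_lt_compat_r with (r := eps) in HN; auto. unfold Rdiv in HN.
      rewrite Rmult_assoc, Rinv_l in HN; lra. }
    nra. }
  assert (HxC : InCr G s x).
  { intros eps Heps. destruct (archi (2 / eps)) as [N HN]. exists (bb phi pick N).
    exists (2 * tt phi pick (S N)). split; auto.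
    pose proof (tt_dec phi pick (S N)). rewrite S_INR in H. pose proof (tt_pos phi pick (S N)).
    pose proof (pos_INR N).
    assert (2 < INR N * eps). { apply Rmult_lt_compat_r with (r := eps) in HN; auto. unfold Rdiv in HN.
      rewrite Rmult_assoc, Rinv_l in HN; lra. }
    nra. }
  assert (Hxb : opnorm_le x (2 * tt phi pick 1)).
  { replace x with (opsub x (lam G s (bb phi pick 0))). apply Hx.
    apply op_ext; intros; unfold opsub. rewrite bb_0. unfold lam. simpl. ring. }
  destruct (PB G s phi x _ Hs (HM x HxC) Hxb) as [M HMb].
  destruct (archi M) as [k Hk].
  set (F := FF phi pick (S k)). set (a := snd (pick (KK phi pick k))). set (t := tt phi pick (S k)).
  destruct (HP (KK phi pick k)) as [HF [Ha Hnot]]. apply Hnot. fold a. rewrite <- FF_S. fold F.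
  assert (Hid : opscal (RtoC t) (Sop G s phi F (lam G s a)) =
     opsub (opsub (Sop G s phi F x) (Sop G s phi F (opsub x (lam G s (bb phi pick (S k)))))) (Sop G s phi F (lam G s (bb phi pick k)))).
  { rewrite <- Sop_scal, <- lam_scl. rewrite <- !Sop_sub. unfold Sop. f_equal. apply functional_extensionality; intro g.
    unfold hat, opsub. unfold t, a; rewrite bb_S, lam_app. unfold opadd. ring. }
  assert (HF' : NoDup F) by (unfold F; rewrite FF_S; auto).
  assert (Hb1 : opnorm_le (opscal (RtoC t) (Sop G s phi F (lam G s a))) (M + 1 + Db phi (bb phi pick k))).
  { rewrite Hid. apply N_sub. apply N_sub. apply HMb; auto.
    eapply N_mono. apply S_gen_bound. auto. apply (Hx (S k)). unfold F; apply tt_C. apply S_lam_bound; auto. }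
  assert (Ht : 0 < t) by apply tt_pos.
  replace (Sop G s phi F (lam G s a)) with (opscal (RtoC (/ t)) (opscal (RtoC t) (Sop G s phi F (lam G s a)))).
  2:{ apply op_ext; intros; unfold opscal. rewrite Cmult_assoc, <- RtoC_mult, Rinv_l by lra. ring. }
  eapply N_mono. apply N_scal, Hb1. rewrite Cmod_pos by (left; apply Rinv_0_lt_compat; lra).
  unfold KK. fold t. rewrite S_INR. unfold Rdiv. rewrite Rmult_comm. apply Rmult_le_compat_r.
  left; apply Rinv_0_lt_compat; lra. lra. Qed.


Lemma lam_diff (G : Grp) s A B : opsub (lam G s A) (lam G s B) = lam G s (A ++ map (scl (RtoC (-1))) B).
Proof. rewrite lam_app, lam_scl. apply op_ext; intros; unfold opsub, opadd, opscal.
  apply injective_projections; simpl; ring. Qed.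

Lemma pmap_diff {G : Grp} (phi : G -> C) A B r :
  map (pmap phi) (A ++ map (scl r) B) = map (pmap phi) A ++ map (scl r) (map (pmap phi) B).
Proof. rewrite map_app, !map_map. f_equal. apply map_ext. intros p. unfold pmap, scl; simpl. f_equal. ring. Qed.

Lemma w_split {G : Grp} (w L : op G) : w = opadd L (opsub w L).
Proof. apply op_ext; intros; unfold opadd, opsub; ring. Qed.

Lemma UB (G : Grp) s phi : cocycle G s -> InMCF G s phi ->
  exists K, 0 <= K /\ forall F w c, NoDup F -> InCr G s w -> opnorm_le w c -> opnorm_le (Sop G s phi F w) (K * c).
Proof. intros Hs HM. destruct (UB0 G s phi Hs HM) as [K [HK H0]]. exists K. split; auto.
  intros F w c HF Hw Hc. pose proof (N_nonneg _ _ Hc). pose proof (CFs_nonneg phi F).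
  apply N_closure. nra. intros e He.
  destruct (Hw (e / (K + CFs phi F + 1))) as [a [c1 [Hc1 N1]]]. apply Rdiv_lt_0_compat; lra.
  assert (HL : opnorm_le (lam G s a) (c + c1)).
  { replace (lam G s a) with (opsub w (opsub w (lam G s a))) by (apply op_ext; intros; unfold opsub; ring).
    apply N_sub; auto. }
  rewrite (w_split w (lam G s a)), Sop_add. eapply N_mono. apply N_add. apply H0; eauto.
  apply S_gen_bound; eauto. pose proof (N_nonneg _ _ N1).
  assert ((K + CFs phi F) * c1 <= e).
  { apply Rmult_lt_compat_r with (r := K + CFs phi F + 1) in Hc1; [|lra]. unfold Rdiv in Hc1.
    rewrite Rmult_assoc, Rinv_l in Hc1 by lra. nra. }
  nra. Qed.

Lemma filter_all {A} (p : A -> bool) l : (forall x, In x l -> p x = true) -> filter p l = l.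
Proof. induction l; simpl; intros H; auto. rewrite H by auto. f_equal; auto. Qed.

Lemma Sop_lam_full (G : Grp) s phi F a : cocycle G s -> NoDup F -> incl (map fst a) F ->
  Sop G s phi F (lam G s a) = lam G s (map (pmap phi) a).
Proof. intros Hs HF HI. rewrite S_lam by auto. rewrite filter_all; auto. intros p Hp. unfold inF.
  destruct (excluded_middle_informative (In (fst p) F)) as [Hi|Hn]. reflexivity. exfalso; apply Hn, HI, in_map; auto. Qed.

Lemma P1 (G : Grp) s phi : cocycle G s -> InMCF G s phi -> InMA G s phi.
Proof. intros Hs HM. destruct (UB0 G s phi Hs HM) as [K [HK H0]]. exists K. intros a c Ha.
  change (opnorm_le (lam G s (map (pmap phi) a)) (K*c)).
  rewrite <- (Sop_lam_full G s phi (nodup deq (map fst a)) a Hs).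
  apply H0; auto. apply NoDup_nodup. apply NoDup_nodup. intros g Hg; apply nodup_In; auto. Qed.

Lemma coef_pmap {G : Grp} (phi : G -> C) a g : coef (map (pmap phi) a) g = Cmult (phi g) (coef a g).
Proof. unfold coef. rewrite sumC_map, <- sumC_scal. apply sumC_ext. intros p _. unfold pmap, indc; simpl.
  destruct (excluded_middle_informative (g = fst p)); subst; ring. Qed.

Lemma Cmod_small (z : C) : (forall e, 0 < e -> Cmod z <= e) -> z = RtoC 0.
Proof. intros H. apply Cmod_eq_0. pose proof (Cmod_ge0 z). destruct (Req_dec (Cmod z) 0); auto.
  specialize (H (Cmod z / 2)). lra. Qed.

Lemma Mval_hat (G : Grp) s phi x y : cocycle G s -> InCr G s x -> Mval G s phi x y ->
  forall g, hat y g = Cmult (phi g) (hat x g).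
Proof. intros Hs Hx HM g.
  assert (E : Cminus (hat y g) (Cmult (phi g) (hat x g)) = RtoC 0).
  { apply Cmod_small. intros e He.
    destruct (HM (e/2)) as [d [Hd Hd']]. lra.
    set (eta := Rmin d (e / (2 * (Cmod (phi g) + 1)))).
    assert (Heta : 0 < eta). { unfold eta. apply Rmin_pos; auto. apply Rdiv_lt_0_compat; [lra|].
      pose proof (Cmod_ge0 (phi g)); lra. }
    destruct (Hx eta Heta) as [a [c2 [Hc2 N2]]].
    destruct (Hd' a) as [c1 [Hc1 N1]]. exists c2. split. eapply Rlt_le_trans; [apply Hc2|apply Rmin_l]. apply N_symm; auto.
    assert (B1 : Cmod (Cminus (hat (lam G s (map (pmap phi) a)) g) (hat y g)) <= c1) by exact (hat_bound _ _ _ g N1).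
    assert (B2 : Cmod (Cminus (hat x g) (hat (lam G s a) g)) <= c2) by exact (hat_bound _ _ _ g N2).
    rewrite hat_lam, coef_pmap in B1 by auto. rewrite hat_lam in B2 by auto.
    replace (Cminus (hat y g) (Cmult (phi g) (hat x g))) with
      (Cplus (Cmult (RtoC (-1)) (Cminus (Cmult (phi g) (coef a g)) (hat y g))) (Cmult (phi g) (Cmult (RtoC (-1)) (Cminus (hat x g) (coef a g))))).
    2:{ apply injective_projections; simpl; ring. }
    eapply Rle_trans. apply Cmod_triangle. rewrite !Cmod_mult, !Cmod_m1'.
    assert (eta <= e / (2 * (Cmod (phi g) + 1))) by apply Rmin_r.
    pose proof (Cmod_ge0 (phi g)). pose proof (N_nonneg _ _ N2).
    assert (Cmod (phi g) * c2 <= e/2).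
    { assert (c2 * (2 * (Cmod (phi g) + 1)) <= e).
      { apply Rmult_le_compat_r with (r := 2 * (Cmod (phi g) + 1)) in H; [|lra]. unfold Rdiv in H.
        rewrite Rmult_assoc, Rinv_l in H by lra. nra. }
      nra. }
    nra. }
  replace (hat y g) with (Cplus (Cminus (hat y g) (Cmult (phi g) (hat x g))) (Cmult (phi g) (hat x g))) by ring.
  rewrite E. ring. Qed.


Lemma inv_pos_n (n : nat) : 0 < / (INR n + 1).
Proof. apply Rinv_0_lt_compat. pose proof (pos_INR n); lra. Qed.

Lemma P_exist (G : Grp) s phi x : cocycle G s -> InMA G s phi -> InCr G s x -> exists y, Mval G s phi x y.
Proof.
  intros Hs [K HK] Hx.
  assert (HK0 : 0 <= K).
  { assert (H1 : opnorm_le (lam G s nil) 1).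
    { replace (lam G s nil) with (fun (_ : vec G) (_ : G) => RtoC 0) by (apply op_ext; auto).
      eapply N_mono. apply N_zero. lra. }
    destruct (HK nil 1 H1) as [H _]. lra. }
  set (an := fun n => proj1_sig (ClassicalEpsilon.constructive_indefinite_description _ (Hx _ (inv_pos_n n)))).
  assert (Han : forall n, opnorm_le (opsub x (lam G s (an n))) (/ (INR n + 1))).
  { intros n. unfold an. destruct (ClassicalEpsilon.constructive_indefinite_description _ _) as [a [c [Hc Nc]]]. simpl.
    eapply N_mono; eauto; lra. }
  clearbody an.
  assert (Hdiff : forall a n c, opnorm_le (opsub (lam G s a) x) c ->
            opnorm_le (opsub (lam G s (map (pmap phi) a)) (lam G s (map (pmap phi) (an n)))) (K * (c + / (INR n + 1)))).
  { intros a n c Hc. rewrite lam_diff, <- pmap_diff. apply HK. rewrite <- lam_diff.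
    eapply N_tri; eauto. }
  destruct (complete G (fun n => lam G s (map (pmap phi) (an n))) (fun n => K * (2 * / (INR n + 1)))) as [y Hy].
  { intros n m Hnm. eapply N_mono. apply Hdiff. apply N_symm, Han.
    apply Rmult_le_compat_l; auto. assert (/ (INR m + 1) <= / (INR n + 1)).
    { apply Rinv_le_contravar. pose proof (pos_INR n); lra. apply le_INR in Hnm; lra. } lra. }
  { intros eps Heps. destruct (archi (2 * K / eps)) as [N HN]. exists N.
    pose proof (pos_INR N). assert (2 * K < eps * (INR N + 1)).
    { apply Rmult_lt_compat_r with (r := eps) in HN; auto. unfold Rdiv in HN.
      rewrite Rmult_assoc, Rinv_l in HN; lra. }
    apply Rmult_lt_reg_r with (INR N + 1). lra.
    replace (K * (2 * / (INR N + 1)) * (INR N + 1)) with (2 * K) by (field; lra). lra. }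
  exists y. intros eps Heps.
  destruct (archi (6 * K / eps)) as [n Hn]. pose proof (pos_INR n).
  assert (Hn' : 6 * K < eps * (INR n + 1)).
  { apply Rmult_lt_compat_r with (r := eps) in Hn; auto. unfold Rdiv in Hn.
    rewrite Rmult_assoc, Rinv_l in Hn; lra. }
  assert (Hn2 : K * (/ (INR n + 1)) <= eps / 6).
  { apply Rmult_le_reg_r with (INR n + 1). lra.
    replace (K * / (INR n + 1) * (INR n + 1)) with K by (field; lra).
    replace (eps / 6 * (INR n + 1)) with (eps * (INR n + 1) / 6) by field. lra. }
  exists (eps / (3 * (K + 1))). split. apply Rdiv_lt_0_compat; lra.
  intros a [c1 [Hc1 N1]]. pose proof (N_nonneg _ _ N1).
  exists (K * (c1 + / (INR n + 1)) + K * (2 * / (INR n + 1))). split.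
  - assert (K * c1 < eps / 3 + 0 \/ K * c1 <= eps/3).
    { right. apply Rle_trans with (K * (eps / (3 * (K + 1)))). apply Rmult_le_compat_l; lra.
      unfold Rdiv. rewrite Rinv_mult. 
      assert (K * / (K + 1) <= 1). { apply Rmult_le_reg_r with (K + 1). lra. rewrite Rmult_assoc, Rinv_l by lra. lra. }
      assert (0 < / 3) by lra. nra. }
    nra.
  - change (map (fun p => (fst p, Cmult (phi (fst p)) (snd p))) a) with (map (pmap phi) a).
    eapply N_tri. apply Hdiff; eauto. apply N_symm, Hy. Qed.

Lemma InCr_sub (G : Grp) s x b : InCr G s x -> InCr G s (opsub x (lam G s b)).
Proof. intros Hx eps Heps. destruct (Hx eps Heps) as [a [c [Hc Nc]]].
  exists (a ++ map (scl (RtoC (-1))) b). exists c. split; auto.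
  rewrite <- lam_diff. replace (opsub (opsub x (lam G s b)) (opsub (lam G s a) (lam G s b))) with (opsub x (lam G s a)); auto.
  apply op_ext; intros; unfold opsub; ring. Qed.


Lemma P3_conv (G : Grp) s phi x y : cocycle G s -> InMCF G s phi -> InCr G s x -> Mval G s phi x y ->
  series_conv_to G s (fun g => Cmult (phi g) (hat x g)) y.
Proof. intros Hs HM Hx HMv. destruct (UB G s phi Hs HM) as [K [HK HU]].
  intros eps Heps. destruct (HMv (eps / 2)) as [d [Hd Hd']]. lra.
  set (eta := Rmin d (eps / (4 * (K + 1)))).
  assert (Heta : 0 < eta) by (unfold eta; apply Rmin_pos; auto; apply Rdiv_lt_0_compat; lra).
  destruct (Hx eta Heta) as [a [c0 [Hc0 N0]]].
  destruct (Hd' a) as [c1 [Hc1 N1]].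
  { exists c0. split. eapply Rlt_le_trans; [apply Hc0|apply Rmin_l]. apply N_symm; auto. }
  exists (map fst a). intros F HF HI.
  change (psum G s F (fun g => Cmult (phi g) (hat x g))) with (Sop G s phi F x).
  rewrite (w_split x (lam G s a)), Sop_add, Sop_lam_full by auto.
  exists (c1 + K * c0). split.
  - assert (c0 <= eps / (4 * (K + 1))) by (left; eapply Rlt_le_trans; [apply Hc0|apply Rmin_r]).
    assert (K * c0 <= eps / 4).
    { pose proof (N_nonneg _ _ N0). apply Rle_trans with (K * (eps / (4 * (K + 1)))). apply Rmult_le_compat_l; lra.
      unfold Rdiv. rewrite Rinv_mult.
      assert (K * / (K + 1) <= 1). { apply Rmult_le_reg_r with (K + 1). lra. rewrite Rmult_assoc, Rinv_l by lra. lra. }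
      assert (0 < / 4) by lra. nra. }
    lra.
  - replace (opsub (opadd (lam G s (map (pmap phi) a)) (Sop G s phi F (opsub x (lam G s a)))) y)
      with (opadd (opsub (lam G s (map (pmap phi) a)) y) (Sop G s phi F (opsub x (lam G s a)))).
    2:{ apply op_ext; intros; unfold opadd, opsub; ring. }
    apply N_add. exact N1. apply HU; auto. apply InCr_sub; auto. Qed.

Theorem proposition4p7 (G : Grp) (s : G -> G -> C) (Hs : cocycle G s) :
  (forall phi : G -> C, InMCF G s phi -> InMA G s phi) /\
  (forall phi : G -> C,
     InMCF G s phi <->
     (InMA G s phi /\
      forall x y : op G, InCr G s x -> Mval G s phi x y -> InCF G s y)) /\
  (forall phi : G -> C, InMCF G s phi ->
     forall x : op G, InCr G s x ->
       (exists y : op G, Mval G s phi x y) /\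
       (forall y : op G, Mval G s phi x y ->
          series_conv_to G s (fun g => Cmult (phi g) (hat x g)) y)).
Proof.
  split; [|split].
  - intros phi HM. apply P1; auto.
  - intros phi. split.
    + intros HM. split. apply P1; auto. intros x y Hx HMv. split.
      * intros eps Heps. destruct (HMv eps Heps) as [d [Hd Hd']].
        destruct (Hx d Hd) as [a [c0 [Hc0 N0]]].
        destruct (Hd' a) as [c1 [Hc1 N1]]. { exists c0. split; auto. apply N_symm; auto. }
        exists (map (fun p => (fst p, Cmult (phi (fst p)) (snd p))) a). exists c1. split; auto. apply N_symm; auto.
      * exists y. replace (hat y) with (fun g => Cmult (phi g) (hat x g)).
        apply P3_conv; auto. apply functional_extensionality; intro g. symmetry. apply (Mval_hat G s phi x y); auto.
    + intros [HMA Hc] x Hx. destruct (P_exist G s phi x Hs HMA Hx) as [y HMv].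
      destruct (Hc x y Hx HMv) as [_ [z Hz]]. exists z.
      replace (fun g => Cmult (phi g) (hat x g)) with (hat y); auto.
      apply functional_extensionality; intro g. apply (Mval_hat G s phi x y); auto.
  - intros phi HM x Hx. split.
    + apply P_exist; auto. apply P1; auto.
    + intros y HMv. apply P3_conv; auto.
Qed.
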